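(* Let $n,d,t,a$ be integers with $3\le d\le n-2$, $2\le t\le d-1$ and $1\le a\le n-d-2$. Then $m_{G_{n,d,t,a}}[n-d+2,n]=n-d$.
   Context: For a graph $G$ of order $n$, the Laplacian eigenvalues are the eigenvalues of $L(G)=D(G)-A(G)$, and for an interval $I\subseteq[0,n]$, $m_G I$ is the number of Laplacian eigenvalues of $G$ (with multiplicity) in $I$. $G_{n,d,t,a}$ is the graph obtained from a path $v_1v_2\dots v_{d+1}$ and a vertex-disjoint complete graph $K_{n-d-1}$ by adding all edges between every vertex of $K_{n-d-1}$ and each of $v_t,v_{t+1}$, all edges between $v_{t-1}$ and a fixed set of $a$ vertices of $K_{n-d-1}$, and all edges between $v_{t+2}$ and each of the remaining $n-d-1-a$ vertices of $K_{n-d-1}$. *)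

(* Defs.v *)
From HB Require Import structures.
From mathcomp Require Import all_boot all_order all_algebra all_field.
Set Implicit Arguments. Unset Strict Implicit. Unset Printing Implicit Defensive.
Import Order.TTheory GRing.Theory Num.Theory.

(* Index k (0 <= k <= d) is the path
   vertex v_{k+1}; indices d+1 .. n-1 form K_{n-d-1}.  The fixed set of
   a clique vertices adjacent to v_{t-1} is {d+1, ..., d+a}. *)
Definition Gedge (d t a i j : nat) : bool :=
  [|| (j == i.+1) && (j <= d)
    , [&& d < i, d < j & i != j]
    , (d < j) && ((i == t.-1) || (i == t))              (* K -- v_t, v_{t+1} *)
    , [&& d < j, j <= d + a & i == t - 2]               (* a vertices -- v_{t-1} *)
    | (d + a < j) && (i == t.+1) ].                     (* rest -- v_{t+2} *)

Definition Gadj (d t a : nat) (i j : nat) : bool := Gedge d t a i j || Gedge d t a j i.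

Definition Gdeg (n d t a : nat) (i : 'I_n) : nat :=
  #|[set j : 'I_n | Gadj d t a i j]|.

Definition Glap (n d t a : nat) : 'M[algC]_n :=
  (\matrix_(i, j) (if i == j then (Gdeg d t a i)%:R
                  else - (Gadj d t a i j)%:R))%R.

Definition is_spectrum (n : nat) (M : 'M[algC]_n) (s : seq algC) : Prop :=
  char_poly M = (\prod_(x <- s) ('X - x%:P))%R.

Definition count_in (lo hi : algC) (s : seq algC) : nat :=
  count (fun x => (lo <= x) && (x <= hi))%R s.

(* Main.v *)
Require Import Defs.
From mathcomp Require Import all_boot all_order all_algebra all_field.
From mathcomp Require Import zify ring.
Import Order.TTheory GRing.Theory Num.Theory.
Set Implicit Arguments. Unset Strict Implicit. Unset Printing Implicit Defensive.

Definition omg (K : nat) (sx sy : bool) : nat :=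
  if sx then (if sy then 0 else K * K.+1) else (if sy then K.+1 else 2 * K).

Lemma nat_aux (r x y n : nat) : (r + y <= n)%N -> (x + y)%N = n -> (r <= x)%N.
Proof. lia. Qed.

Section Gen.
Local Open Scope ring_scope.
Local Open Scope sesquilinear_scope.
Variable n : nat.
Local Notation C := algC.
Definition sq (x : C) := x * x^*.

Definition qf (A : 'M[C]_n) (u : 'rV[C]_n) : C :=
  \sum_i \sum_j u 0 i * A i j * (u 0 j)^*.
Definition nrm (u : 'rV[C]_n) : C := \sum_i sq (u 0 i).

Lemma qf_mxE A u : (u *m A *m u^t*) 0 0 = qf A u.
Proof.
rewrite /qf mxE exchange_big; apply: eq_bigr => j _.
rewrite !mxE big_distrl /=; apply: eq_bigr => i _; by rewrite ?mxE.
Qed.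

Lemma nrm_mxE u : (u *m u^t*) 0 0 = nrm u.
Proof. rewrite /nrm mxE; apply: eq_bigr => j _; by rewrite !mxE. Qed.

Lemma sq_ge0 x : 0 <= sq x. Proof. exact: mul_conjC_ge0. Qed.
Lemma sq_gt0 x : x != 0 -> 0 < sq x. Proof. by rewrite /sq mul_conjC_gt0. Qed.

Variable A : 'M[C]_n.
Hypothesis Ah : A \is hermsymmx.
Let P := spectralmx A.
Let D := spectral_diag A.

Lemma PPt : P *m P^t* = 1%:M.
Proof. exact/unitarymxP/spectral_unitarymx. Qed.

Lemma A_eq : A = P^t* *m diag_mx D *m P.
Proof.
have := hermitian_normalmx Ah => /orthomx_spectralP.
by rewrite invmx_unitary ?spectral_unitarymx.
Qed.

Lemma ctM m p (X : 'M[C]_(1, m)) (Y : 'M[C]_(m, p)) : (X *m Y)^t* = Y^t* *m X^t*.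
Proof. by rewrite trmx_mul map_mxM. Qed.

Lemma qf_spec w : qf A (w *m P) = \sum_i D 0 i * sq (w 0 i).
Proof.
rewrite -qf_mxE {1}A_eq.
rewrite ctM.
have -> : w *m P *m (P^t* *m diag_mx D *m P) *m (P^t* *m w^t*) = w *m diag_mx D *m w^t*.
  by rewrite !mulmxA !mulmxtVK ?spectral_unitarymx.
rewrite qf_mxE /qf; apply: eq_bigr => i _.
rewrite (bigD1 i) //= big1 ?addr0.
  by rewrite !mxE eqxx mulr1n /sq mulrCA mulrA.
by move=> j /negPf ji; rewrite !mxE eq_sym ji mulr0n mulr0 mul0r.
Qed.

Lemma nrm_spec w : nrm (w *m P) = \sum_i sq (w 0 i).
Proof.
rewrite -nrm_mxE ctM -mulmxA (mulmxA P) PPt mul1mx nrm_mxE //.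
Qed.

Lemma D_real i : D 0 i \is Num.real.
Proof. by have /mxOverP := hermitian_spectral_diag_real Ah; apply. Qed.

Lemma rank_sel (act : pred 'I_n) (M : 'M[C]_n) :
  (forall i j, act i -> act j -> M i j = (i == j)%:R) ->
  \rank (rowsub (@enum_val _ act) M) = #|act|.
Proof.
move=> HM.
set f := @enum_val _ act.
have free1 : \rank (rowsub f (1%:M : 'M[C]_n)) = #|act|.
  apply/eqP; apply: inj_row_free => z zE; apply/rowP => r.
  move: zE => /rowP /(_ (f r)); rewrite !mxE => <-.
  rewrite (bigD1 r) //= big1 ?addr0; first by rewrite !mxE eqxx mulr1.
  move=> r' rr'; rewrite !mxE; case: eqP => [/enum_val_inj E|]; last by rewrite mulr0.
  by rewrite E eqxx in rr'.
apply/eqP; rewrite eqn_leq rank_leq_row /= -{1}free1.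
apply: leq_trans (mxrankM_maxl _ (diag_mx (\row_j ((act j)%:R : C)))).
apply: eq_leq; congr (\rank _); apply/matrixP => r j.
rewrite mul_mx_diag !mxE.
have ar : act (f r) by exact: enum_valP.
case aj : (act j); first by rewrite mulr1 HM.
rewrite mulr0; case: eqP => // E; by rewrite -E ar in aj.
Qed.

Lemma rank_V (q : pred 'I_n) : \rank (rowsub (@enum_val _ q) P) = #|q|.
Proof.
rewrite rowsubE mxrankMfree ?rank_sel //.
  by move=> i j _ _; rewrite mxE.
by rewrite row_free_unit; apply/unitarymx_unit/spectral_unitarymx.
Qed.

Lemma rowsub_spec (q : pred 'I_n) u : (u <= rowsub (@enum_val _ q) P)%MS ->
  exists w : 'rV_n, u = w *m P /\ forall i, ~~ q i -> w 0 i = 0.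
Proof.
case/submxP => z ->; rewrite rowsubE; exists (z *m rowsub (@enum_val _ q) 1%:M).
split; first by rewrite mulmxA.
move=> i qi; rewrite mxE big1 // => r _; rewrite !mxE.
case: eqP; last by rewrite mulr0.
by move=> E; have := enum_valP r; rewrite E => qi'; case/negP: qi.
Qed.

Lemma disj_rank k l (W : 'M[C]_(k,n)) (V : 'M[C]_(l,n)) :
  (forall u : 'rV_n, (u <= W)%MS -> (u <= V)%MS -> u = 0) -> (\rank W + \rank V <= n)%N.
Proof.
move=> H; rewrite -mxrank_disjoint_sum ?rank_leq_col //.
apply/eqP/rowV0P => u uWV; apply: H.
  exact: submx_trans uWV (capmxSl _ _).
exact: submx_trans uWV (capmxSr _ _).
Qed.

Lemma exists_nz (w : 'rV[C]_n) : w != 0 -> exists i, w 0 i != 0.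
Proof.
move=> wn0; case: (pickP (fun i => w 0 i != 0)) => [i wi | H]; first by exists i.
by case/eqP: wn0; apply/rowP => i; rewrite mxE; apply/eqP/negbFE/H.
Qed.

Lemma sum_lt (w : 'rV[C]_n) (c : C) : w != 0 -> (forall i, w 0 i != 0 -> D 0 i < c) ->
  \sum_i D 0 i * sq (w 0 i) < c * \sum_i sq (w 0 i).
Proof.
move=> /exists_nz [i wi] H.
rewrite mulr_sumr (bigD1 i) //= [X in _ < X](bigD1 i) //=.
apply: ltr_leD; first by rewrite ltr_pM2r ?sq_gt0 ?H.
apply: ler_sum => j _; case: (eqVneq (w 0 j) 0) => [->|wj].
  by rewrite /sq mul0r !mulr0.
by rewrite ler_wpM2r ?sq_ge0 // ltW ?H.
Qed.

Lemma sum_ge (w : 'rV[C]_n) (c : C) : (forall i, w 0 i != 0 -> c <= D 0 i) ->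
  c * \sum_i sq (w 0 i) <= \sum_i D 0 i * sq (w 0 i).
Proof.
move=> H; rewrite mulr_sumr; apply: ler_sum => j _.
case: (eqVneq (w 0 j) 0) => [->|wj]; first by rewrite /sq mul0r !mulr0.
by rewrite ler_wpM2r ?sq_ge0 ?H.
Qed.

Lemma card_split (c : C) : c \is Num.real ->
  (#|[pred i | (c <= D 0 i)%R]| + #|[pred i | (D 0 i < c)%R]|)%N = n.
Proof.
move=> cr; have E := cardC [pred i | (c <= D 0 i)%R]; rewrite card_ord in E.
apply: etrans E.
congr (_ + _)%N; apply: eq_card => i /=; rewrite !inE real_ltNge //; exact: D_real.
Qed.

Lemma count_lower k (W : 'M[C]_(k,n)) (c : C) : c \is Num.real ->
  (forall u, (u <= W)%MS -> c * nrm u <= qf A u) ->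
  (\rank W <= #|[pred i | (c <= D 0 i)%R]|)%N.
Proof.
move=> cr H.
have E2 := @disj_rank _ _ W (rowsub (@enum_val _ [pred i | (D 0 i < c)%R]) P).
rewrite rank_V in E2; have E1 := card_split cr.
have H2 : (\rank W + #|[pred i | (D 0 i < c)%R]| <= n)%N.
  apply: E2 => u uW /rowsub_spec [w [uE wq]].
  case: (eqVneq w 0) => [w0|wn0]; first by rewrite uE w0 mul0mx.
  have := H u uW; rewrite uE qf_spec nrm_spec.
  have L : \sum_i D 0 i * sq (w 0 i) < c * \sum_i sq (w 0 i).
    by apply: sum_lt wn0 _ => i wi; apply: contraNT wi => /wq -> .
  by move=> /(lt_le_trans L); rewrite ltxx.
exact: nat_aux H2 E1.
Qed.

Lemma count_upper k (W : 'M[C]_(k,n)) (c : C) : c \is Num.real ->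
  (forall u, (u <= W)%MS -> u != 0 -> qf A u < c * nrm u) ->
  (\rank W <= #|[pred i | (D 0 i < c)%R]|)%N.
Proof.
move=> cr H.
have E2 := @disj_rank _ _ W (rowsub (@enum_val _ [pred i | (c <= D 0 i)%R]) P).
rewrite rank_V in E2; have E1 := card_split cr.
have H2 : (\rank W + #|[pred i | (c <= D 0 i)%R]| <= n)%N.
  apply: E2 => u uW /rowsub_spec [w [uE wq]].
  case: (eqVneq u 0) => [//|un0].
  have := H u uW un0; rewrite uE qf_spec nrm_spec.
  have L : c * \sum_i sq (w 0 i) <= \sum_i D 0 i * sq (w 0 i).
    by apply: sum_ge => i wi; apply: contraNT wi => /wq -> .
  by move=> /(le_lt_trans L); rewrite ltxx.
rewrite addnC in E1; exact: nat_aux H2 E1.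
Qed.

Lemma D_le (b : C) : (forall u, qf A u <= b * nrm u) -> forall i, D 0 i <= b.
Proof.
move=> H i; have := H ((\row_j ((j == i)%:R : C)) *m P).
rewrite qf_spec nrm_spec (bigD1 i) //= [X in _ <= _ * X](bigD1 i) //= !big1 ?addr0.
- by rewrite /sq !mxE eqxx conjC1 !mulr1.
- by move=> j /negPf ji; rewrite /sq !mxE ji mul0r.
- by move=> j /negPf ji; rewrite /sq !mxE ji mul0r mulr0.
Qed.

Lemma char_spec : char_poly A = \prod_(i < n) ('X - (D 0 i)%:P).
Proof.
have PtP : P^t* *m P = 1%:M.
  by rewrite -invmx_unitary ?spectral_unitarymx // mulVmx // spectral_unit.
have -> : char_poly A = char_poly (diag_mx D).
  rewrite /char_poly /char_poly_mx {1}A_eq !map_mxM.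
  set Q := map_mx polyC (P^t*); set R := map_mx polyC P.
  set Dp := map_mx polyC (diag_mx D).
  have QR : Q *m R = 1%:M by rewrite -map_mxM PtP map_mx1.
  have -> : 'X%:M - Q *m Dp *m R = Q *m ('X%:M - Dp) *m R.
    by rewrite mulmxBr mulmxBl mul_mx_scalar -scalemxAl QR scalemx1.
  by rewrite !det_mulmx mulrAC -det_mulmx QR det1 mul1r.
rewrite char_poly_trig ?diag_mx_is_trig //.
by apply: eq_bigr => i _; rewrite !mxE eqxx mulr1n.
Qed.
End Gen.

Section Lap.
Local Open Scope ring_scope.
Local Open Scope sesquilinear_scope.
Variable n : nat.
Local Notation C := algC.
Variable adj : 'I_n -> 'I_n -> bool.
Hypothesis adj_sym : forall i j, adj i j = adj j i.
Hypothesis adj_irr : forall i, adj i i = false.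

Definition Lmx : 'M[C]_n :=
  \matrix_(i, j) (if i == j then (#|[set j | adj i j]|)%:R else - (adj i j)%:R).

Definition Ef (u : 'rV[C]_n) : C := \sum_i \sum_j (adj i j)%:R * sq (u 0 i - u 0 j).

Lemma Lmx_herm : Lmx \is hermsymmx.
Proof.
apply/is_hermitianmxP; rewrite expr0 scale1r; apply/matrixP => i j; rewrite !mxE.
rewrite eq_sym adj_sym; case: eqP => [->|_]; by rewrite ?rmorphN ?rmorph_nat.
Qed.

Lemma deg_sum i : (#|[set j | adj i j]|)%:R = \sum_j ((adj i j)%:R : C).
Proof.
rewrite -sum1dep_card natr_sum [RHS](bigID (fun j => adj i j)) /=.
by rewrite [X in _ = _ + X]big1 ?addr0 => [|j /negbTE ->]; first apply: eq_bigr => j ->.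
Qed.

Lemma sqB x y : sq (x - y) = sq x + sq y - x * y^* - y * x^*.
Proof. rewrite /sq rmorphB /=; ring. Qed.

Lemma Ef_qf u : Ef u = 2 * qf Lmx u.
Proof.
have row i : \sum_j u 0 i * Lmx i j * (u 0 j)^* =
   \sum_j (adj i j)%:R * (sq (u 0 i) - u 0 i * (u 0 j)^*).
  rewrite (bigD1 i) //= [RHS](bigD1 i) //= adj_irr mul0r add0r !mxE eqxx deg_sum.
  rewrite (bigD1 i) //= adj_irr add0r.
  rewrite mulr_sumr big_distrl /= -big_split /=; apply: eq_bigr => j ji.
  rewrite !mxE eq_sym (negbTE ji) /sq; ring.
rewrite /qf (eq_bigr _ (fun i _ => row i)) mulr2n mulrDl mul1r.
rewrite /Ef.
have -> : \sum_i \sum_j (adj i j)%:R * sq (u 0 i - u 0 j) =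
  \sum_i \sum_j (adj i j)%:R * (sq (u 0 i) - u 0 i * (u 0 j)^*) +
  \sum_i \sum_j (adj i j)%:R * (sq (u 0 j) - u 0 j * (u 0 i)^*).
  rewrite -big_split /=; apply: eq_bigr => i _; rewrite -big_split /=.
  by apply: eq_bigr => j _; rewrite sqB; ring.
congr (_ + _); rewrite exchange_big /=; apply: eq_bigr => i _; apply: eq_bigr => j _.
by rewrite adj_sym.
Qed.

Lemma cardS_sum (S : pred 'I_n) : \sum_(j | S j) (1 : C) = (#|S|)%:R.
Proof. by rewrite -sum1_card natr_sum. Qed.

Lemma sq_sum (S : pred 'I_n) (x : 'I_n -> C) :
  \sum_(i | S i) \sum_(j | S j) sq (x i - x j) =
  2 * (#|S|)%:R * \sum_(i | S i) sq (x i) - 2 * sq (\sum_(i | S i) x i).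
Proof.
set a := \sum_(i | S i) sq (x i).
set s := \sum_(i | S i) x i.
have sc : (s)^* = \sum_(i | S i) (x i)^* by rewrite rmorph_sum.
have inner i : \sum_(j | S j) sq (x i - x j) =
   (#|S|)%:R * sq (x i) + a - x i * s^* - s * (x i)^*.
  under eq_bigr => j _ do rewrite sqB.
  rewrite !sumrB big_split /= -cardS_sum mulr_suml sc mulr_sumr mulr_suml.
  by congr (_ + _ - _ - _); apply: eq_bigr => j _; rewrite ?mul1r.
rewrite (eq_bigr _ (fun i _ => inner i)) !sumrB big_split /= -mulr_sumr.
have ca : \sum_(i | S i) a = (#|S|)%:R * a.
  by rewrite -cardS_sum mulr_suml; apply: eq_bigr => i _; rewrite mul1r.
rewrite ca -mulr_suml -mulr_sumr -sc -/a -/s /sq; ring.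
Qed.
Lemma max_form u : Ef u <= 2 * n%:R * nrm u.
Proof.
apply: le_trans (_ : \sum_i \sum_j sq (u 0 i - u 0 j) <= _).
  apply: ler_sum => i _; apply: ler_sum => j _.
  by case: (adj i j); rewrite ?mul1r ?mul0r ?sq_ge0.
have := sq_sum (fun _ => true) (fun i => u 0 i) => ->.
have -> : #|(fun _ : 'I_n => true)| = n by rewrite -[RHS](card_ord n); apply: eq_card.
rewrite /nrm lerBlDr lerDl; apply: mulr_ge0 => //; exact: sq_ge0.
Qed.

Lemma sum_ge1 (S : pred 'I_n) i :
  (exists j, ~~ S j && adj i j) -> 1 <= \sum_(j | ~~ S j) ((adj i j)%:R : C).
Proof.
case=> j /andP [Sj aj]; rewrite (bigD1 j) //= aj lerDl.
by apply: sumr_ge0 => k _; apply: ler0n.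
Qed.

Lemma lower_form (S : pred 'I_n) (u : 'rV[C]_n) :
  (forall i, ~~ S i -> u 0 i = 0) -> \sum_i u 0 i = 0 ->
  (forall i j, S i -> S j -> i != j -> adj i j) ->
  (forall i, S i -> exists j, ~~ S j && adj i j) ->
  2 * (#|S|.+1)%:R * nrm u <= Ef u.
Proof.
move=> u0 su adjS ex.
have nrmS : nrm u = \sum_(i | S i) sq (u 0 i).
  rewrite /nrm (bigID S) /= [X in _ + X]big1 ?addr0 // => i /u0 ->.
  by rewrite /sq mul0r.
have sS : \sum_(i | S i) u 0 i = 0.
  apply: (etrans _ su); rewrite [RHS](bigID S) /= [X in _ = _ + X]big1 ?addr0 // => i /u0 ->.
have SS : \sum_(i | S i) \sum_(j | S j) (adj i j)%:R * sq (u 0 i - u 0 j) =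
          2 * (#|S|)%:R * nrm u.
  have E := sq_sum S (fun i => u 0 i).
  have Z : sq (\sum_(i | S i) u 0 i) = 0 by rewrite sS /sq mul0r.
  rewrite Z mulr0 subr0 in E.
  rewrite nrmS -E; apply: eq_bigr => i Si; apply: eq_bigr => j Sj.
  case: (eqVneq i j) => [->|ij]; first by rewrite subrr /sq mul0r mulr0.
  by rewrite adjS // mul1r.
have SN : nrm u <= \sum_(i | S i) \sum_(j | ~~ S j) (adj i j)%:R * sq (u 0 i - u 0 j).
  rewrite nrmS; apply: ler_sum => i Si.
  under eq_bigr => j Sj do rewrite (u0 j Sj) subr0.
  rewrite -mulr_suml -[X in X <= _]mul1r ler_wpM2r ?sq_ge0 //. exact: sum_ge1 (ex i Si).
have NS : nrm u <= \sum_(i | ~~ S i) \sum_(j | S j) (adj i j)%:R * sq (u 0 i - u 0 j).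
  rewrite exchange_big /=; apply: le_trans SN _; apply: ler_sum => i Si.
  apply: ler_sum => j Sj; rewrite adj_sym (u0 j Sj) sub0r subr0.
  by rewrite /sq rmorphN mulrNN.
have NN : 0 <= \sum_(i | ~~ S i) \sum_(j | ~~ S j) (adj i j)%:R * sq (u 0 i - u 0 j).
  apply: sumr_ge0 => i _; apply: sumr_ge0 => j _; apply: mulr_ge0; [exact: ler0n|exact: sq_ge0].
rewrite /Ef (bigID S) /=.
rewrite (eq_bigr (fun i => \sum_(j | S j) (adj i j)%:R * sq (u 0 i - u 0 j) +
   \sum_(j | ~~ S j) (adj i j)%:R * sq (u 0 i - u 0 j))); last by move=> i _; rewrite (bigID S).
rewrite big_split /=.
rewrite [X in _ <= _ + X](eq_bigr (fun i => \sum_(j | S j) (adj i j)%:R * sq (u 0 i - u 0 j) +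
   \sum_(j | ~~ S j) (adj i j)%:R * sq (u 0 i - u 0 j))); last by move=> i _; rewrite (bigID S).
rewrite big_split /= SS.
have -> : 2 * (#|S|.+1)%:R * nrm u = 2 * (#|S|)%:R * nrm u + nrm u + (nrm u + 0).
  by rewrite -addn1 natrD; ring.
by apply: lerD; [rewrite lerD2l | apply: lerD].
Qed.

Lemma upper_form (om : 'I_n -> 'I_n -> nat) (Kc B : nat) (u : 'rV[C]_n) :
  (forall i j, adj i j -> Kc%:R * sq (u 0 i - u 0 j) <= (om i j)%:R * sq (u 0 i) + (om j i)%:R * sq (u 0 j)) ->
  (forall i, (\sum_j adj i j * om i j < B)%N) -> u != 0 ->
  Kc%:R * Ef u < 2 * B%:R * nrm u.
Proof.
move=> pw deg un0.
have step1 : Kc%:R * Ef u <= \sum_i \sum_j (adj i j)%:R * ((om i j)%:R * sq (u 0 i) + (om j i)%:R * sq (u 0 j)).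
  rewrite /Ef mulr_sumr; apply: ler_sum => i _; rewrite mulr_sumr; apply: ler_sum => j _.
  case aij : (adj i j); last by rewrite !mul0r mulr0.
  by rewrite !mul1r pw.
apply: le_lt_trans step1 _.
under eq_bigr => i _ do (under eq_bigr => j _ do rewrite mulrDr; rewrite big_split /=).
rewrite big_split /=.
have sw : \sum_i \sum_j (adj i j)%:R * ((om j i)%:R * sq (u 0 j)) =
          \sum_i \sum_j (adj i j)%:R * ((om i j)%:R * sq (u 0 i)).
  by rewrite exchange_big /=; apply: eq_bigr => i _; apply: eq_bigr => j _; rewrite adj_sym.
under [X in X + _]eq_bigr => i _ do under eq_bigr => j _ do rewrite mulrA.
rewrite sw.
under [X in _ + X]eq_bigr => i _ do under eq_bigr => j _ do rewrite mulrA.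
rewrite -mulr2n -[X in X < _]mulr_natl -mulrA ltr_pM2l ?ltr0n //.
rewrite /nrm mulr_sumr.
have := exists_nz un0 => -[i ui].
rewrite [X in X < _](bigD1 i) //= [X in _ < X](bigD1 i) //=.
have key k : \sum_j (adj k j)%:R * (om k j)%:R * sq (u 0 k) = ((\sum_j adj k j * om k j)%N)%:R * sq (u 0 k).
  by rewrite natr_sum mulr_suml; apply: eq_bigr => j _; rewrite natrM.
apply: ltr_leD.
  by rewrite key ltr_pM2r ?sq_gt0 // ltr_nat deg.
apply: ler_sum => k _; rewrite key ler_wpM2r ?sq_ge0 //.
by rewrite ler_nat ltnW ?deg.
Qed.
End Lap.

Lemma sumI n lo hi : \sum_(j < n) (lo <= j < hi : nat) = (minn n hi - lo)%N.
Proof.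
elim: n => [|n IH]; first by rewrite big_ord0; lia.
rewrite big_ord_recr /= IH; case: (lo <= n < hi) /andP; lia.
Qed.

Lemma sum3 n (f : nat -> nat) al l1 h1 be l2 h2 ga l3 h3 :
  (forall j, j < n -> f j <= al * (l1 <= j < h1) + be * (l2 <= j < h2) + ga * (l3 <= j < h3)) ->
  \sum_(j < n) f j <= al * (minn n h1 - l1) + be * (minn n h2 - l2) + ga * (minn n h3 - l3).
Proof.
move=> H; rewrite -!sumI !big_distrr -!big_split /=.
by apply: leq_sum => j _; apply: H.
Qed.

Section Comb.
Variables n d t a : nat.
Hypotheses (h1 : 3 <= d) (h2 : d <= n - 2) (h3 : 2 <= t) (h4 : t <= d - 1) (h5 : 1 <= a) (h6 : a <= n - d - 2).

Definition inS (i : nat) : bool := (i == t.-1) || (i == t) || (d < i).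
Definition K := n - d.
Definition om (i j : nat) : nat := omg K (inS i) (inS j).

Ltac splitH := repeat match goal with
 | H : is_true (_ || _) |- _ => case/orP: H => H
 | H : is_true (_ && _) |- _ => let H1 := fresh "H" in case/andP: H => H1 H
 | H : (_ || _) = true |- _ => case/orP: H => H
 | H : (_ || _) = false |- _ => move/negbT: H; rewrite negb_or => H
 | H : is_true (~~ (_ || _)) |- _ => move: H; rewrite negb_or => H
 end.
Ltac nb := repeat match goal with |- context [nat_of_bool ?b] =>
   let H := fresh "B" in case: (boolP b) => H; rewrite ?H /= end.
Ltac crush := intros; unfold om, omg, K in *; let E := fresh "E" in
  case: (boolP (Gadj _ _ _ _ _)) => E /=; [| by []];
  rewrite mul1n; move: E; rewrite /Gadj /Gedge => E; unfold inS in *; splitH;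
  try (exfalso; lia); repeat (case: ifP => ?); splitH; try (exfalso; lia);
  nb; rewrite ?muln0 ?muln1 ?addn0; lia.

Lemma F5 i : i < n -> \sum_(j < n) Gadj d t a i j * om i j < K * (K + 2).
Proof.
move=> lin.
have K3 : 3 <= K by rewrite /K; lia.
have aK : a + 2 <= K by rewrite /K; lia.
case iS: (inS i).
  set tau := if (i == t.-1) || ((d < i) && (i <= d + a)) then t - 2 else t + 1.
  have B : \sum_(j < n) Gadj d t a i j * om i j <= K * K.+1 * (minn n tau.+1 - tau) + 0 * (minn n 0 - 0) + 0 * (minn n 0 - 0).
    apply: (@sum3 n (fun j => Gadj d t a i j * om i j)) => j lj; rewrite /tau; move: iS; crush.
  have X1 : minn n tau.+1 - tau <= 1 by lia.
  rewrite !mul0n !addn0 in B; apply: leq_ltn_trans B _.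
  move: X1; set X := minn _ _ - _; nia.
have iT : i <= d by move: iS; rewrite /inS; lia.
have omT : forall j, om i j = if inS j then K.+1 else 2 * K by move=> j; rewrite /om /omg iS.
case: (eqVneq i (t - 2)) => [it2|nt2].
  have B : \sum_(j < n) Gadj d t a i j * om i j <= 2 * K * (minn n (t - 2) - (t - 3)) + K.+1 * (minn n t - t.-1) + K.+1 * (minn n (d + a).+1 - d.+1).
    apply: (@sum3 n (fun j => Gadj d t a i j * om i j)) => j lj; rewrite omT; move: it2 iS; crush.
  apply: leq_ltn_trans B _.
  have -> : minn n (d + a).+1 - d.+1 = a by lia.
  have X1 : minn n (t - 2) - (t - 3) <= 1 by lia.
  have X2 : minn n t - t.-1 <= 1 by lia.
  move: X1 X2; set X := minn _ (t - 2) - _; set Y := minn _ t - _; nia.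
case: (eqVneq i t.+1) => [it1|nt1].
  have B : \sum_(j < n) Gadj d t a i j * om i j <= 2 * K * (minn n t.+3 - t.+2) + K.+1 * (minn n t.+1 - t) + K.+1 * (minn n n - (d + a).+1).
    apply: (@sum3 n (fun j => Gadj d t a i j * om i j)) => j lj; rewrite omT; move: it1 iS; crush.
  apply: leq_ltn_trans B _.
  have -> : minn n n - (d + a).+1 = K - a - 1 by rewrite /K; lia.
  have X1 : minn n t.+3 - t.+2 <= 1 by lia.
  have X2 : minn n t.+1 - t <= 1 by lia.
  move: X1 X2; set X := minn _ t.+3 - _; set Y := minn _ t.+1 - _; nia.
have B : \sum_(j < n) Gadj d t a i j * om i j <= 2 * K * (minn n i - i.-1) + 2 * K * (minn n i.+2 - i.+1) + 0 * (minn n 0 - 0).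
  apply: (@sum3 n (fun j => Gadj d t a i j * om i j)) => j lj; rewrite omT; move: nt1 nt2 iS; crush.
apply: leq_ltn_trans B _.
have X1 : minn n i - i.-1 <= 1 by lia.
have X2 : minn n i.+2 - i.+1 <= 1 by lia.
move: X1 X2; set X := minn _ i - _; set Y := minn _ i.+2 - _; nia.
Qed.

Lemma adjP i j : j.+1 = i -> i <= d -> Gadj d t a i j.
Proof. by move=> <- le; rewrite /Gadj /Gedge eqxx le /= orbT. Qed.
Lemma adjP' i j : i.+1 = j -> j <= d -> Gadj d t a i j.
Proof. by move=> <- le; rewrite /Gadj /Gedge eqxx le. Qed.
Lemma adjKv i j : d < i -> (j == t.-1) || (j == t) -> Gadj d t a i j.
Proof. by move=> di jt; rewrite /Gadj /Gedge di jt /= !orbT. Qed.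
Lemma adjA i j : d < i -> i <= d + a -> j = t - 2 -> Gadj d t a i j.
Proof. by move=> di ia ->; rewrite /Gadj /Gedge di ia eqxx /= !orbT. Qed.
Lemma adjB i j : d + a < i -> j = t.+1 -> Gadj d t a i j.
Proof. by move=> di ->; rewrite /Gadj /Gedge di eqxx /= !orbT. Qed.
Lemma adjK i j : d < i -> d < j -> i != j -> Gadj d t a i j.
Proof. by move=> di dj ij; rewrite /Gadj /Gedge di dj ij /= orbT. Qed.
Lemma adj_symn i j : Gadj d t a i j = Gadj d t a j i.
Proof. by rewrite /Gadj orbC. Qed.

Lemma F2 i : i < n -> inS i -> exists j, [&& j < n, ~~ inS j & Gadj d t a i j].
Proof.
move=> lin iS.
have iS' := iS; move: iS'; rewrite /inS.
case/orP => [/orP [] /eqP it|di].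
- exists (t - 2); rewrite adjP ?andbT; [|lia|lia]. apply/andP; split; rewrite /inS; lia.
- exists t.+1; rewrite adjP' ?andbT; [|lia|lia]. apply/andP; split; rewrite /inS; lia.
case: (leqP i (d + a)) => ia.
- exists (t - 2); rewrite adjA ?andbT //. apply/andP; split; rewrite /inS; lia.
- exists t.+1; rewrite adjB ?andbT //. apply/andP; split; rewrite /inS; lia.
Qed.

Lemma F3 i j : i < n -> j < n -> inS i -> inS j -> i != j -> Gadj d t a i j.
Proof.
move=> lin ljn; rewrite /inS => /orP [/orP [] /eqP it|di] /orP [/orP [] /eqP jt|dj] ij.
- by move: ij; rewrite it jt eqxx.
- by apply: adjP'; lia.
- by rewrite adj_symn; apply: adjKv => //; rewrite it eqxx.
- by apply: adjP; lia.
- by move: ij; rewrite it jt eqxx.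
- by rewrite adj_symn; apply: adjKv => //; rewrite it eqxx orbT.
- by apply: adjKv => //; rewrite jt eqxx.
- by apply: adjKv => //; rewrite jt eqxx orbT.
- exact: adjK.
Qed.

Lemma sum2_ge (f : nat -> nat) p1 q1 p2 q2 :
  (forall j, j < n -> (p1 <= j < q1) + (p2 <= j < q2) <= f j) ->
  (minn n q1 - p1) + (minn n q2 - p2) <= \sum_(j < n) f j.
Proof.
move=> H; rewrite -!sumI -big_split /=.
by apply: leq_sum => j _; apply: H.
Qed.

Lemma F4 : K.+1 <= \sum_(j < n) inS j.
Proof.
apply: leq_trans (@sum2_ge (fun j => inS j) t.-1 t.+1 d.+1 n _).
  rewrite /K; lia.
move=> j lj; rewrite /inS; nb; lia.
Qed.

Definition act1 (k : nat) : bool := inS k && (k != t.-1).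
Definition act2 (k : nat) : bool := (k <= d) && (k != t).

Lemma F6a : K <= \sum_(j < n) act1 j.
Proof.
apply: leq_trans (@sum2_ge act1 t t.+1 d.+1 n _).
  rewrite /K; lia.
move=> j lj; rewrite /act1 /inS; nb; lia.
Qed.

Lemma F6b : d <= \sum_(j < n) act2 j.
Proof.
apply: leq_trans (@sum2_ge act2 0 t t.+1 d.+1 _).
  lia.
move=> j lj; rewrite /act2; nb; lia.
Qed.
Lemma pair_ineq (k : nat) (sx sy : bool) (x y : algC) : (sx -> sy -> x = y) ->
  (k%:R * sq (x - y) <= (omg k sx sy)%:R * sq x + (omg k sy sx)%:R * sq y)%R.
Proof.
move=> H; rewrite -subr_ge0.
have cj (z : algC) (m : nat) : ((m%:R * z)^* = m%:R * z^*)%R by rewrite rmorphM /= conjC_nat.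
case: sx H; case: sy => /= H.
- by rewrite (H isT isT) subrr /sq mul0r !mul0r mulr0 !addr0 subrr.
- have -> : (((k * k.+1)%N)%:R * sq x + k.+1%:R * sq y - k%:R * sq (x - y) = sq (k%:R * x + y))%R.
    by rewrite /sq ?rmorphB ?rmorphD ?rmorphN ?rmorphM /= ?conjC_nat ?natrM; ring.
  exact: sq_ge0.
- have -> : (k.+1%:R * sq x + ((k * k.+1)%N)%:R * sq y - k%:R * sq (x - y) = sq (x + k%:R * y))%R.
    by rewrite /sq ?rmorphB ?rmorphD ?rmorphN ?rmorphM /= ?conjC_nat ?natrM; ring.
  exact: sq_ge0.
- have -> : (((2 * k)%N)%:R * sq x + ((2 * k)%N)%:R * sq y - k%:R * sq (x - y) = k%:R * sq (x + y))%R.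
    by rewrite /sq ?rmorphB ?rmorphD ?rmorphN /= ?natrM; ring.
  by apply: mulr_ge0; [exact: ler0n | exact: sq_ge0].
Qed.

Lemma act2_notS (k : nat) : act2 k -> k != t.-1 -> ~~ inS k.
Proof. rewrite /act2 /inS => /andP [H1 H2] H3; apply/negP => H; move: H1 H2 H3 H; lia. Qed.

Local Open Scope ring_scope.

Lemma card_sumn (P : nat -> bool) : #|[pred i : 'I_n | P i]| = (\sum_(i < n) P i)%N.
Proof.
rewrite -sum1_card big_mkcond /=; apply: eq_bigr => i _; rewrite inE /=.
by case: (P i).
Qed.

Let adj := fun i j : 'I_n => Gadj d t a i j.
Lemma asym (i j : 'I_n) : adj i j = adj j i. Proof. exact: adj_symn. Qed.
Lemma airr (i : 'I_n) : adj i i = false.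
Proof.
rewrite /adj /Gadj orbb /Gedge; apply/negbTE/negP => H; splitH; lia.
Qed.

Let A := Glap n d t a.
Lemma A_Lmx : A = Lmx adj. Proof. by []. Qed.
Lemma A_herm : A \is hermsymmx. Proof. rewrite A_Lmx; exact: Lmx_herm asym. Qed.
Lemma qf_Ef (u : 'rV[algC]_n) : 2 * qf A u = Ef adj u.
Proof. by rewrite A_Lmx (Ef_qf asym airr). Qed.

Lemma nrm_ge0 (u : 'rV[algC]_n) : 0 <= nrm u.
Proof. by apply: sumr_ge0 => i _; exact: sq_ge0. Qed.

Let D := spectral_diag A.

Lemma eig_le_n i : D 0 i <= n%:R.
Proof.
apply: (D_le A_herm) => u.
have := max_form adj u; rewrite -qf_Ef -mulrA ler_pM2l //.
Qed.

Let c : algC := (n - d + 2)%:R.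
Lemma c_real : c \is Num.real. Proof. exact: realn. Qed.

Definition M1 : 'M[algC]_n := \matrix_(i, j) ((i == j)%:R - (nat_of_ord j == t.-1)%:R).
Definition W1 := rowsub (@enum_val _ [pred i : 'I_n | act1 i]) M1.

Lemma rank_W1 : (K <= \rank W1)%N.
Proof.
rewrite /W1 rank_sel; first by rewrite card_sumn; exact: F6a.
move=> i j _ aj; rewrite !mxE; move: aj; rewrite inE /act1 => /andP [_ /negbTE ->].
by rewrite subr0.
Qed.

Lemma sum_delta (k : 'I_n) : \sum_(j < n) ((j == k)%:R : algC) = 1.
Proof.
by rewrite (bigD1 k) //= eqxx big1 ?addr0 // => j /negbTE ->.
Qed.

Lemma W1_cond (u : 'rV[algC]_n) : (u <= W1)%MS -> c * nrm u <= qf A u.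
Proof.
case/submxP => z ->.
set f := @enum_val _ [pred i : 'I_n | act1 i].
have fa r : act1 (f r) by have := enum_valP r; rewrite inE.
have uE j : (z *m W1) 0 j = \sum_r z 0 r * M1 (f r) j.
  by rewrite !mxE; apply: eq_bigr => r _; rewrite !mxE.
have tn : (t.-1 < n)%N by lia.
have u0 (j : 'I_n) : ~~ inS j -> (z *m W1) 0 j = 0.
  move=> jS; rewrite uE big1 // => r _; rewrite !mxE.
  have -> : (f r == j) = false.
    by apply/negbTE; apply: contraNneq jS => <-; move: (fa r); rewrite /act1 => /andP [].
  have -> : (nat_of_ord j == t.-1) = false.
    by apply/negbTE; apply: contraNneq jS => ->; rewrite /inS eqxx.
  by rewrite subrr mulr0.
have su : \sum_j (z *m W1) 0 j = 0.
  under eq_bigr => j _ do rewrite uE.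
  rewrite exchange_big /= big1 // => r _; rewrite -mulr_sumr.
  under eq_bigr => j _ do rewrite mxE.
  rewrite sumrB.
  have -> : \sum_(j < n) ((f r == j)%:R : algC) = 1.
    by rewrite (eq_bigr (fun j => ((j == f r)%:R : algC))) ?sum_delta // => j _; rewrite eq_sym.
  have -> : \sum_(j < n) ((nat_of_ord j == t.-1)%:R : algC) = 1.
    exact: (sum_delta (Ordinal tn)).
  by rewrite subrr mulr0.
have adjS (i j : 'I_n) : inS i -> inS j -> i != j -> adj i j.
  by move=> Si Sj ij; apply: F3 => //; exact: ltn_ord.
have ex (i : 'I_n) : inS i -> exists j : 'I_n, ~~ inS j && adj i j.
  move=> Si; have [j /and3P [jn jS aj]] := F2 (ltn_ord i) Si.
  by exists (Ordinal jn); rewrite jS.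
have := lower_form asym (S := fun i : 'I_n => inS i) u0 su adjS ex.
rewrite -qf_Ef -mulrA ler_pM2l // => H.
apply: le_trans H; rewrite ler_wpM2r ?nrm_ge0 // /c ler_nat.
have := F4; rewrite -card_sumn /K.
have -> : #|(fun i : 'I_n => inS i)| = #|[pred i : 'I_n | inS i]| by apply: eq_card.
lia.
Qed.

Definition M2 : 'M[algC]_n :=
  \matrix_(i, j) (if nat_of_ord i == t.-1 then (inS j)%:R else (i == j)%:R).
Definition W2 := rowsub (@enum_val _ [pred i : 'I_n | act2 i]) M2.

Lemma rank_W2 : (d <= \rank W2)%N.
Proof.
rewrite /W2 rank_sel; first by rewrite card_sumn; exact: F6b.
move=> i j; rewrite !inE /act2 !mxE => /andP [id it] /andP [jd jt].
case: eqP => // it1; congr (_ %:R).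
rewrite /inS -(inj_eq val_inj) /= it1; case E: (t.-1 == j :> nat); move: E jt jd; lia.
Qed.

Lemma W2_cond (u : 'rV[algC]_n) : (u <= W2)%MS -> u != 0 -> qf A u < c * nrm u.
Proof.
case/submxP => z ->.
set f := @enum_val _ [pred i : 'I_n | act2 i].
have fa r : act2 (f r) by have := enum_valP r; rewrite inE.
set v := z *m W2.
set beta := \sum_r z 0 r * ((nat_of_ord (f r) == t.-1)%:R).
have vS (j : 'I_n) : inS j -> v 0 j = beta.
  move=> jS; rewrite !mxE; apply: eq_bigr => r _; rewrite !mxE.
  case: ifP => ft; first by rewrite jS.
  have -> : (f r == j) = false.
    by apply/negbTE; apply: contraTneq jS => <-; apply: act2_notS (fa r) (negbT ft).
  by [].
have pw (i j : 'I_n) : adj i j -> (K%:R * sq (v 0 i - v 0 j) <=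
    (om i j)%:R * sq (v 0 i) + (om j i)%:R * sq (v 0 j)).
  move=> _; rewrite /om; apply: pair_ineq => Si Sj.
  by rewrite (vS i Si) (vS j Sj).
have deg (i : 'I_n) : (\sum_j adj i j * om i j < K * (K + 2))%N.
  exact: F5 (ltn_ord i).
move=> vn0.
have := upper_form asym (om := fun i j : 'I_n => om i j) pw deg vn0.
rewrite -qf_Ef.
have K0 : (0 < K)%N by rewrite /K; lia.
have -> : (K * (K + 2))%N%:R = K%:R * (n - d + 2)%:R :> algC.
  by rewrite -natrM /K; congr (_ %:R); lia.
move=> H.
have E : 2 * (K%:R * (n - d + 2)%:R) * nrm v = K%:R * (2 * (c * nrm v)) by rewrite /c; ring.
by rewrite E ltr_pM2l ?ltr0n // ltr_pM2l // in H.
Qed.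



Lemma nat_aux2 (p q r m e : nat) : (p + q)%N = m -> (e <= r)%N -> (r <= q)%N -> (p <= m - e)%N.
Proof. lia. Qed.

Lemma count_p : #|[pred i : 'I_n | (c <= D 0 i)%R]| = K.
Proof.
apply/eqP; rewrite eqn_leq; apply/andP; split.
  have H1 := count_upper A_herm (W := W2) c_real W2_cond.
  have H2 := card_split A_herm c_real.
  exact: nat_aux2 H2 rank_W2 H1.
exact: leq_trans rank_W1 (count_lower A_herm (W := W1) c_real W1_cond).
Qed.

Lemma count_final :
  count_in (n - d + 2)%:R n%:R [seq D 0 i | i <- index_enum 'I_n] = (n - d)%N.
Proof.
rewrite /count_in count_map -sum1_count -[RHS]count_p -sum1_card.
apply: eq_bigl => i; rewrite inE /= eig_le_n andbT //.
Qed.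

Lemma spec_final : is_spectrum (Glap n d t a) [seq D 0 i | i <- index_enum 'I_n].
Proof. by rewrite /is_spectrum big_map; exact: char_spec A_herm. Qed.

End Comb.

Unset Implicit Arguments.

Theorem lemma2p7 (n d t a : nat) :
  3 <= d -> d <= n - 2 -> 2 <= t -> t <= d - 1 -> 1 <= a -> a <= n - d - 2 ->
  exists s : seq algC,
    is_spectrum (Glap n d t a) s /\
    count_in (n - d + 2)%:R%R n%:R%R s = n - d.
Proof.
move=> h1 h2 h3 h4 h5 h6.
exists [seq spectral_diag (Glap n d t a) 0%R i | i <- index_enum 'I_n]; split.
  by apply: spec_final.
by apply: count_final.
Qed.
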